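(* Write $\mathbb Z_2=\{1,\tau\}$ and let $\tau$ act on $\mathbb Z^n$ by $\tau\cdot\lambda=-\lambda$; form the semidirect product $\mathbb Z^n\rtimes\mathbb Z_2$, whose elements are written $\lambda\cdot x$ with $\lambda\in\mathbb Z^n$, $x\in\mathbb Z_2$. Let $e_1,\dots,e_n$ be the standard basis of $\mathbb Z^n$, and set $L_n^\circ=\{\lambda\cdot1 : \sum_i\lambda_i=0\}$ and $L_n^\tau=\{\lambda\cdot\tau:\sum_i\lambda_i=1\}$. Then: (1) The assignment $g_i\mapsto e_i\cdot\tau$ defines an injective group morphism $L_n\to\mathbb Z^n\rtimes\mathbb Z_2$. (2) Its image is $L_n^\circ\cup L_n^\tau$. (3) $L_n\cong\mathbb Z^{n-1}\rtimes\mathbb Z_2$, where $\mathbb Z_2$ acts on $\mathbb Z^{n-1}$ by $\lambda\mapsto-\lambda$.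
   Context: $L_n=\mathbb Z_2^{*n}/\langle abc=cba \mid a,b,c\in\{g_1,\dots,g_n\}\rangle$, where $g_1,\dots,g_n$ (with $g_i^2=1$) are the standard generators of the free product $\mathbb Z_2^{*n}$; we keep the notation $g_i$ for their images in $L_n$. $L_n$ is the diagonal group of $A_o^*(n)$, i.e. $C^*(L_n)=A_o^*(n)/\langle u_{ij}=0,\ i\ne j\rangle$ with $g_i$ the image of $u_{ii}$. *)

(* Defs.v *)
From HB Require Import structures.
From mathcomp Require Import all_boot all_order all_algebra.
From Stdlib Require Import Relations.
Set Implicit Arguments. Unset Strict Implicit. Unset Printing Implicit Defensive.
Import Order.TTheory GRing.Theory Num.Theory.
Local Open Scope ring_scope.

(* L_n is the
   quotient of the free monoid seq 'I_n by the congruence generated by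
   g_i g_i = 1 and abc = cba (a,b,c generators).  Since all generators
   are involutions this monoid quotient is the group
   Z_2^{*n} / <abc = cba>. *)
Inductive Lstep (n : nat) : seq 'I_n -> seq 'I_n -> Prop :=
| Lstep_inv (u v : seq 'I_n) (i : 'I_n) :
    Lstep (u ++ [:: i; i] ++ v) (u ++ v)
| Lstep_rel (u v : seq 'I_n) (a b c : 'I_n) :
    Lstep (u ++ [:: a; b; c] ++ v) (u ++ [:: c; b; a] ++ v).

Definition Lequiv (n : nat) : relation (seq 'I_n) :=
  clos_refl_sym_trans (seq 'I_n) (@Lstep n).

(* An element lambda . x is a pair (lambda, x) with lambda : 'rV[int]_m
   and x : bool, where true stands for tau and false for 1.
   tau acts by lambda |-> -lambda. *)
Definition sdelt (m : nat) := ('rV[int]_m * bool)%type.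

Definition sdact (m : nat) (x : bool) (mu : 'rV[int]_m) : 'rV[int]_m :=
  if x then - mu else mu.

Definition sdmul (m : nat) (p q : sdelt m) : sdelt m :=
  (p.1 + sdact p.2 q.1, xorb p.2 q.2).

Definition sdone (m : nat) : sdelt m := (0, false).

Definition stdbasis (n : nat) (i : 'I_n) : 'rV[int]_n := delta_mx 0 i.

Definition gen_img (n : nat) (i : 'I_n) : sdelt n := (stdbasis i, true).

Definition phi (n : nat) (w : seq 'I_n) : sdelt n :=
  foldr (fun i acc => sdmul (gen_img i) acc) (sdone n) w.

Definition coord_sum (n : nat) (l : 'rV[int]_n) : int := \sum_(i < n) l 0 i.

Definition Lcirc (n : nat) (p : sdelt n) : Prop :=
  p.2 = false /\ coord_sum p.1 = 0.
Definition Ltau (n : nat) (p : sdelt n) : Prop :=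
  p.2 = true /\ coord_sum p.1 = 1.

(* Main.v *)
Require Import Defs.
From HB Require Import structures.
From mathcomp Require Import all_boot all_order all_algebra.
From Stdlib Require Import Relations.
Import Order.TTheory GRing.Theory Num.Theory.
Local Open Scope ring_scope.

Section Gen.
Context {n : nat}.
Implicit Types (u v w a b : seq 'I_n).

Lemma Leq_refl w : Lequiv w w. Proof. exact: rst_refl. Qed.
Lemma Leq_sym u v : Lequiv u v -> Lequiv v u. Proof. exact: rst_sym. Qed.
Lemma Leq_trans u v w : Lequiv u v -> Lequiv v w -> Lequiv u w.
Proof. exact: rst_trans. Qed.

Lemma Lstep_app a b u v : Lstep u v -> Lstep (a ++ u ++ b) (a ++ v ++ b).
Proof.
case=> [u' v' i|u' v' x y t].
- have -> : a ++ (u' ++ [:: i; i] ++ v') ++ b = (a ++ u') ++ [:: i; i] ++ (v' ++ b) by rewrite !catA.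
  have -> : a ++ (u' ++ v') ++ b = (a ++ u') ++ (v' ++ b) by rewrite !catA.
  exact: Lstep_inv.
- have -> : a ++ (u' ++ [:: x; y; t] ++ v') ++ b = (a ++ u') ++ [:: x; y; t] ++ (v' ++ b) by rewrite !catA.
  have -> : a ++ (u' ++ [:: t; y; x] ++ v') ++ b = (a ++ u') ++ [:: t; y; x] ++ (v' ++ b) by rewrite !catA.
  exact: Lstep_rel.
Qed.

Lemma Leq_app a b u v : Lequiv u v -> Lequiv (a ++ u ++ b) (a ++ v ++ b).
Proof.
elim=> [x y H|x|x y _ IH|x y z _ IH1 _ IH2].
- by apply: rst_step; apply: Lstep_app.
- exact: rst_refl.
- exact: rst_sym.
- exact: rst_trans IH2.
Qed.

Lemma Leq_catl a u v : Lequiv u v -> Lequiv (a ++ u) (a ++ v).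
Proof. by move=> /(Leq_app a [::]); rewrite !cats0. Qed.
Lemma Leq_catr b u v : Lequiv u v -> Lequiv (u ++ b) (v ++ b).
Proof. by move=> /(Leq_app [::] b). Qed.
Lemma Leq_cons i u v : Lequiv u v -> Lequiv (i :: u) (i :: v).
Proof. exact: (Leq_catl [:: i]). Qed.

Lemma Leq_inv u v i : Lequiv (u ++ [:: i; i] ++ v) (u ++ v).
Proof. by apply: rst_step; apply: Lstep_inv. Qed.
Lemma Leq_rel u v x y t : Lequiv (u ++ [:: x; y; t] ++ v) (u ++ [:: t; y; x] ++ v).
Proof. by apply: rst_step; apply: Lstep_rel. Qed.

Lemma sdmul_assoc (p q r : sdelt n) : sdmul p (sdmul q r) = sdmul (sdmul p q) r.
Proof.
case: p q r => [a x] [b y] [c t]; rewrite /sdmul /sdact /=; congr pair.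
- by case: x; case: y => /=; rewrite ?opprD ?opprK addrA.
- by case: x; case: y; case: t.
Qed.

Lemma sdone_mul (p : sdelt n) : sdmul (sdone n) p = p.
Proof. by case: p => l b; rewrite /sdmul /sdact /= add0r. Qed.

Lemma phi_cons i w : phi (i :: w) = sdmul (gen_img i) (phi w).
Proof. by []. Qed.

Lemma phi_cat w w' : phi (w ++ w') = sdmul (phi w) (phi w').
Proof.
elim: w => [|i w IH] /=; first by rewrite sdone_mul.
by rewrite IH sdmul_assoc.
Qed.

Lemma phi_ii (i : 'I_n) : phi [:: i; i] = sdone n.
Proof. by rewrite /phi /= /sdmul /sdact /sdone /= oppr0 addr0 addrN. Qed.

Lemma phi_abc (x y t : 'I_n) : phi [:: x; y; t] = phi [:: t; y; x].
Proof.
rewrite /phi /= /sdmul /sdact /sdone /= oppr0 !addr0; congr pair.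
rewrite !opprD !opprK.
by rewrite addrA addrC; congr (_ + _); rewrite addrC.
Qed.

Lemma phi_step u v : Lstep u v -> phi u = phi v.
Proof.
case=> [u' v' i|u' v' x y t]; rewrite !phi_cat.
- by rewrite phi_ii sdone_mul.
- by rewrite phi_abc.
Qed.

Lemma phi_Leq u v : Lequiv u v -> phi u = phi v.
Proof.
elim=> [x y H|x|x y _ IH|x y z _ IH1 _ IH2] //; first exact: phi_step.
by rewrite IH1.
Qed.

Lemma coord_sumD (l l' : 'rV[int]_n) : coord_sum (l + l') = coord_sum l + coord_sum l'.
Proof. by rewrite /coord_sum -big_split; apply: eq_bigr => j _; rewrite mxE. Qed.
Lemma coord_sumN (l : 'rV[int]_n) : coord_sum (- l) = - coord_sum l.
Proof. by rewrite /coord_sum -sumrN; apply: eq_bigr => j _; rewrite mxE. Qed.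
Lemma coord_sum0 : coord_sum (0 : 'rV[int]_n) = 0.
Proof. by rewrite /coord_sum big1 // => j _; rewrite mxE. Qed.
Lemma coord_sum_e (i : 'I_n) : coord_sum (stdbasis i) = 1.
Proof.
rewrite /coord_sum (bigD1 i) //= big1 ?addr0; first by rewrite mxE !eqxx.
by move=> j /negbTE Hj; rewrite mxE Hj andbF.
Qed.

Lemma coord_sum_phi w : coord_sum (phi w).1 = ((phi w).2 : bool)%:R.
Proof.
elim: w => [|i w IH]; first by rewrite /= coord_sum0.
rewrite phi_cons; move: IH; case: (phi w) => l c /= IH.
rewrite /sdact coord_sumD coord_sumN coord_sum_e IH.
by clear IH; case: c.
Qed.

End Gen.
Arguments Leq_trans {n u v w}.
Arguments Leq_catr {n} b {u v}.
Arguments Leq_catl {n} a {u v}.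
Arguments Leq_cons {n} i {u v}.
Arguments Leq_app {n} a b {u v}.
Arguments Leq_sym {n u v}.
Arguments phi_Leq {n u v}.

Section NF.
Context {n : nat}.
Variable z : 'I_n.

Definition pw (i : 'I_n) (k : int) : seq 'I_n :=
  match k with
  | Posz m => flatten (nseq m [:: i; z])
  | Negz m => flatten (nseq m.+1 [:: z; i])
  end.

Definition blocks (s : seq 'I_n) (l : 'rV[int]_n) : seq 'I_n :=
  flatten [seq pw j (l 0 j) | j <- s].

Definition nfe (l : 'rV[int]_n) := blocks (index_enum 'I_n) l.
Definition nf (p : sdelt n) := nfe p.1 ++ (if p.2 then [:: z] else [::]).

Lemma flat_swap (i : 'I_n) m :
  z :: flatten (nseq m [:: i; z]) = flatten (nseq m [:: z; i]) ++ [:: z].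
Proof. by elim: m => //= m ->. Qed.

Lemma A_block i k : Lequiv (z :: pw i k) (pw i (- k) ++ [:: z]).
Proof.
case: k => [[|m]|m] /=; try exact: Leq_refl.
- by rewrite flat_swap; apply: Leq_refl.
- rewrite -cat_cons flat_swap.
  apply: (Leq_trans (v := i :: flatten (nseq m [:: z; i]))).
  + exact: (Leq_inv [::] (i :: flatten (nseq m [:: z; i])) z).
  + apply: Leq_sym.
    rewrite -catA -[X in Lequiv _ X]cats0 -cat_cons.
    exact: Leq_inv.
Qed.

Lemma A_blocks s l : Lequiv (z :: blocks s l) (blocks s (- l) ++ [:: z]).
Proof.
elim: s => [|j s IH] /=; first exact: Leq_refl.
rewrite /blocks /= -/(blocks s l) -/(blocks s (- l)) mxE.
rewrite -cat_cons.
apply: Leq_trans; first exact: (Leq_catr _ (A_block j (l 0 j))).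
rewrite -!catA /=.
exact: Leq_catl.
Qed.

Lemma comm_base (i j : 'I_n) : Lequiv [:: i; z; j; z] [:: j; z; i; z].
Proof. exact: (Leq_rel [::] [:: z] i z j). Qed.

Lemma comm_base2 (i j : 'I_n) : Lequiv [:: i; z; z; j] [:: z; j; i; z].
Proof.
apply: (Leq_trans (v := [:: i; j])); first exact: (Leq_inv [:: i] [:: j] z).
apply: Leq_sym.
apply: (Leq_trans (v := [:: i; j; z; z])); first exact: (Leq_rel [::] [:: z] z j i).
exact: (Leq_inv [:: i; j] [::] z).
Qed.

Lemma comm_nseq (i : 'I_n) x m :
  Lequiv ([:: i; z] ++ x) (x ++ [:: i; z]) ->
  Lequiv ([:: i; z] ++ flatten (nseq m x)) (flatten (nseq m x) ++ [:: i; z]).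
Proof.
move=> H; elim: m => [|m IH]; first exact: Leq_refl.
rewrite [nseq _ _]/= [flatten (_ :: _)]/=.
rewrite catA; apply: Leq_trans; first exact: (Leq_catr _ H).
rewrite -!catA; exact: Leq_catl.
Qed.

Lemma comm_block i j k : Lequiv ([:: i; z] ++ pw j k) (pw j k ++ [:: i; z]).
Proof.
case: k => m; apply: comm_nseq; [exact: comm_base | exact: comm_base2].
Qed.

Lemma merge_block i k : Lequiv ([:: i; z] ++ pw i k) (pw i (k + 1)).
Proof.
case: k => [m|m].
- rewrite -PoszD addn1 /=; exact: Leq_refl.
- rewrite /=.
  apply: (Leq_trans (v := flatten (nseq m [:: z; i]))).
  + apply: (Leq_trans (v := [:: i; i] ++ flatten (nseq m [:: z; i]))).
    * exact: (Leq_inv [:: i] (i :: flatten (nseq m [:: z; i])) z).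
    * exact: (Leq_inv [::] (flatten (nseq m [:: z; i])) i).
  + case: m => [|m].
    * rewrite NegzE addNr /=; exact: Leq_refl.
    * have -> : Negz m.+1 + 1 = Negz m by rewrite !NegzE -addn1 PoszD opprD addrK.
      exact: Leq_refl.
Qed.

Lemma addeE (l : 'rV[int]_n) i j : (l + stdbasis i) 0 j = l 0 j + (j == i)%:R.
Proof. by rewrite !mxE eqxx. Qed.

Lemma B_blocks s l i : uniq s -> i \in s ->
  Lequiv ([:: i; z] ++ blocks s l) (blocks s (l + stdbasis i)).
Proof.
elim: s => [|j s IH] //= /andP [js us].
rewrite /blocks /= -/(blocks s l) -/(blocks s (l + stdbasis i)) in_cons.
case: eqP => [ij _|/eqP ij /= Hi].
- subst i.
  have -> : blocks s (l + stdbasis j) = blocks s l.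
    rewrite /blocks; congr flatten; apply/eq_in_map => k ks.
    rewrite addeE; case: eqP => [kj|]; last by rewrite addr0.
    by rewrite -kj ks in js.
  rewrite addeE eqxx.
  exact: (Leq_catr (blocks s l) (merge_block j (l 0 j))).
- have ji : (j == i) = false by apply/negbTE; rewrite eq_sym.
  rewrite addeE ji addr0.
  apply: Leq_trans; first exact: (Leq_catr (blocks s l) (comm_block i j (l 0 j))).
  rewrite -catA; exact: Leq_catl (IH us Hi).
Qed.

Lemma B_nfe l i : Lequiv ([:: i; z] ++ nfe l) (nfe (l + stdbasis i)).
Proof. apply: B_blocks; [exact: index_enum_uniq | exact: mem_index_enum]. Qed.

Lemma A_nfe l : Lequiv (z :: nfe l) (nfe (- l) ++ [:: z]).
Proof. exact: A_blocks. Qed.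

Lemma core i p : Lequiv (i :: nf p) (nf (sdmul (gen_img i) p)).
Proof.
case: p => l [] /=; rewrite /nf /sdmul /sdact /=.
- rewrite cats0.
  apply: (Leq_trans (v := [:: i; z] ++ nfe (- l))).
  + apply: Leq_cons.
    have := A_nfe (- l); rewrite opprK => H.
    exact: Leq_sym H.
  + by rewrite addrC; exact: B_nfe.
- rewrite cats0.
  apply: (Leq_trans (v := [:: i; z] ++ (z :: nfe l))).
  + apply: Leq_sym; exact: (Leq_inv [:: i] (nfe l) z).
  + apply: Leq_trans (Leq_catl _ (A_nfe l)) _.
    rewrite catA addrC; exact: Leq_catr (B_nfe _ _).
Qed.

Lemma nfe0 : nfe 0 = [::].
Proof.
rewrite /nfe /blocks; elim: (index_enum 'I_n) => //= j s ->.
by rewrite mxE.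
Qed.

Lemma nf_phi w : Lequiv w (nf (phi w)).
Proof.
elim: w => [|i w IH].
- by rewrite /nf /= nfe0; exact: Leq_refl.
- rewrite phi_cons; apply: Leq_trans (Leq_cons i IH) _; exact: core.
Qed.

End NF.

Section Img.
Context {n : nat}.
Variable z : 'I_n.

Lemma phi_pair (a b : 'I_n) : phi [:: a; b] = (stdbasis a - stdbasis b, false).
Proof. by rewrite /phi /= /sdmul /sdact /sdone /= oppr0 addr0. Qed.

Lemma phi_nseq (a b : 'I_n) m :
  phi (flatten (nseq m [:: a; b])) = ((Posz m) *: (stdbasis a - stdbasis b), false).
Proof.
elim: m => [|m IH]; first by rewrite scale0r.
rewrite (_ : flatten (nseq m.+1 _) = [:: a; b] ++ flatten (nseq m [:: a; b])) // phi_cat phi_pair IH /sdmul /sdact /=.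
by rewrite (_ : Posz m.+1 = 1 + Posz m) ?scalerDl ?scale1r // -PoszD.
Qed.

Lemma phi_pw j k : phi (pw z j k) = (k *: (stdbasis j - stdbasis z), false).
Proof.
case: k => m; rewrite /pw phi_nseq //.
by rewrite NegzE scaleNr -scalerN opprB.
Qed.

Lemma phi_blocks s l :
  phi (blocks z s l) = (\sum_(j <- s) l 0 j *: (stdbasis j - stdbasis z), false).
Proof.
elim: s => [|j s IH]; first by rewrite big_nil.
rewrite /blocks /= -/(blocks z s l) phi_cat IH phi_pw big_cons /sdmul /sdact //=.
Qed.

Lemma phi_nfe l : phi (nfe z l) = (l - coord_sum l *: stdbasis z, false).
Proof.
rewrite /nfe phi_blocks; congr pair.
rewrite /coord_sum scaler_suml [in X in _ = X - _](row_sum_delta l) -sumrB.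
by apply: eq_bigr => j _; rewrite scalerBr.
Qed.

Lemma phi_nf p : Lcirc p \/ Ltau p -> phi (nf z p) = p.
Proof.
case: p => l b [[/= -> H]|[/= -> H]]; rewrite /nf /=.
- by rewrite cats0 phi_nfe H scale0r subr0.
- rewrite phi_cat phi_nfe H scale1r /phi /= /sdmul /sdact /sdone /=.
  by rewrite oppr0 addr0 subrK.
Qed.

End Img.

Lemma phi_img n (w : seq 'I_n) : Lcirc (phi w) \/ Ltau (phi w).
Proof.
have := coord_sum_phi w; case: (phi w) => l [] /= H; [right|left]; by split.
Qed.

Lemma seq_I0 (w : seq 'I_0) : w = [::].
Proof. by case: w => [|[k Hk]]. Qed.

Lemma phi_inj n (w w' : seq 'I_n) : phi w = phi w' -> Lequiv w w'.
Proof.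
case: n w w' => [|m] w w' H.
- rewrite (seq_I0 w) (seq_I0 w'); exact: Leq_refl.
- apply: Leq_trans; first exact: (nf_phi ord0 w).
  rewrite H; exact: Leq_sym (nf_phi ord0 w').
Qed.

Lemma img n (p : sdelt n) : (exists w : seq 'I_n, phi w = p) <-> (Lcirc p \/ Ltau p).
Proof.
split; first by case=> w <-; exact: phi_img.
case: n p => [|m] p.
- case: p => l b [[/= -> _]|[/= _ H]].
  + by exists [::]; rewrite /phi /= /sdone (thinmx0 l).
  + by move: H; rewrite /coord_sum big_ord0.
- by move=> H; exists (nf ord0 p); exact: phi_nf.
Qed.

Section Iso.
Variable m : nat.

Definition proj (l : 'rV[int]_m.+1) : 'rV[int]_m := \row_j l 0 (lift ord0 j).

Lemma projD l l' : proj (l + l') = proj l + proj l'.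
Proof. by apply/rowP => j; rewrite !mxE. Qed.
Lemma projN l : proj (- l) = - proj l.
Proof. by apply/rowP => j; rewrite !mxE. Qed.

Definition fiso (w : seq 'I_m.+1) : sdelt m := (proj (phi w).1, (phi w).2).

Lemma fiso_cat w w' : fiso (w ++ w') = sdmul (fiso w) (fiso w').
Proof.
rewrite /fiso phi_cat; case: (phi w) => l b; case: (phi w') => l' b'.
rewrite /sdmul /sdact /=; case: b; by rewrite projD ?projN.
Qed.

Lemma coord_sum_split (l : 'rV[int]_m.+1) :
  coord_sum l = l 0 ord0 + coord_sum (proj l).
Proof.
rewrite /coord_sum big_ord_recl; congr (_ + _).
by apply: eq_bigr => j _; rewrite mxE.
Qed.

Lemma proj_inj l l' : proj l = proj l' -> coord_sum l = coord_sum l' -> l = l'.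
Proof.
move=> Hp; rewrite !coord_sum_split Hp => /addIr H0.
apply/rowP => k; case: (unliftP ord0 k) => [j ->|->] //.
by have := congr1 (fun r : 'rV[int]_m => r 0 j) Hp; rewrite /= !mxE.
Qed.

Lemma fiso_equiv w w' : Lequiv w w' <-> fiso w = fiso w'.
Proof.
split; first by move/phi_Leq; rewrite /fiso => ->.
rewrite /fiso => [[Hp Hb]]; apply: phi_inj.
move: Hp Hb (coord_sum_phi w) (coord_sum_phi w').
case: (phi w) => l b; case: (phi w') => l' b' /= Hp -> H1 H2.
by rewrite (@proj_inj l l' Hp) // H1 H2.
Qed.

Lemma fiso_surj (p : sdelt m) : exists w, fiso w = p.
Proof.
case: p => mu b.
pose l : 'rV[int]_m.+1 :=
  \row_k (if unlift ord0 k is Some j then mu 0 j else (b : bool)%:R - coord_sum mu).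
have Hp : proj l = mu by apply/rowP => j; rewrite !mxE liftK.
have Hs : coord_sum l = (b : bool)%:R.
  by rewrite coord_sum_split Hp mxE unlift_none subrK.
have [w Hw] : exists w, phi w = (l, b).
  by apply/img; move: Hs; case: (b) => Hs; [right|left].
by exists w; rewrite /fiso Hw /= Hp.
Qed.

End Iso.

Theorem proposition6p1 (n : nat) :
  ((forall w w' : seq 'I_n, phi (w ++ w') = sdmul (phi w) (phi w')) /\
   (forall w w' : seq 'I_n, Lequiv w w' <-> phi w = phi w')) /\
  (forall p : sdelt n, (exists w : seq 'I_n, phi w = p) <-> (Lcirc p \/ Ltau p)) /\
  ((0 < n)%N ->
   exists f : seq 'I_n -> sdelt n.-1,
     (forall w w', f (w ++ w') = sdmul (f w) (f w')) /\
     (forall w w', Lequiv w w' <-> f w = f w') /\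
     (forall p : sdelt n.-1, exists w, f w = p)).
Proof.
split; [split|split].
- exact: phi_cat.
- move=> w w'; split; [exact: phi_Leq | exact: phi_inj].
- exact: img.
- case: n => [//|m] _; exists (@fiso m); split; [exact: fiso_cat|split].
  + exact: fiso_equiv.
  + exact: fiso_surj.
Qed.
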